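(* Let $R$ be a Bézout domain and let $A,B,C\in R^{n\times n}$ satisfy $ABA=ACA$. If $R_r(A)=R_r(ABA)$, then $AB$ is similar to $CA$.
   Context: A Bézout domain is an integral domain in which every finitely generated ideal is principal. For $M\in R^{m\times n}$, $R_r(M)=\{Mx : x\in R^{n\times 1}\}\subseteq R^{m\times 1}$ is the column space of $M$. Two matrices $M,N\in R^{n\times n}$ are similar if $M=S^{-1}NS$ for some invertible $S\in R^{n\times n}$. *)

(* Defs.v *)
From HB Require Import structures.
From mathcomp Require Import all_boot all_order all_algebra.
Set Implicit Arguments. Unset Strict Implicit. Unset Printing Implicit Defensive.
Import GRing.Theory.
Local Open Scope ring_scope.

Definition bezout_domain (R : idomainType) : Prop :=
  forall (k : nat) (a : 'I_k -> R), exists d : R,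
    forall x : R,
      (exists c : 'I_k -> R, x = \sum_(i < k) c i * a i) <-> (exists r : R, x = r * d).

Definition colspace (R : pzRingType) (m n : nat) (M : 'M[R]_(m, n)) : 'cV[R]_m -> Prop :=
  fun y => exists x : 'cV[R]_n, y = M *m x.

Definition mx_similar (R : comUnitRingType) (n : nat) (M N : 'M[R]_n) : Prop :=
  exists S : 'M[R]_n, S \in unitmx /\ M = invmx S *m N *m S.

(* Main.v *)
Require Import Defs.
From HB Require Import structures.
From mathcomp Require Import all_boot all_order all_algebra.
Set Implicit Arguments. Unset Strict Implicit. Unset Printing Implicit Defensive.
Import GRing.Theory.
Local Open Scope ring_scope.

Section M2.
Variable R : comRingType.

Definition mx2 (p q r s : R) : 'M[R]_2 :=
  \matrix_(i < 2, j < 2) if i == 0 then (if j == 0 then p else q) else (if j == 0 then r else s).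
Definition col2 (a b : R) : 'cV[R]_2 := \matrix_(i < 2, j < 1) if i == 0 then a else b.

Lemma mx2M p q r s p' q' r' s' :
  mx2 p q r s *m mx2 p' q' r' s' =
  mx2 (p * p' + q * r') (p * q' + q * s') (r * p' + s * r') (r * q' + s * s').
Proof.
apply/matrixP=> i j; rewrite !mxE !big_ord_recl big_ord0 !mxE addr0.
by case: i => [[|[|]]] //= ?; case: j => [[|[|]]].
Qed.

Lemma mx2_1 : mx2 1 0 0 1 = 1%:M.
Proof.
by apply/matrixP=> i j; rewrite !mxE; case: i => [[|[|]]] //= ?; case: j => [[|[|]]].
Qed.

Lemma mx2_col2 p q r s a b : mx2 p q r s *m col2 a b = col2 (p * a + q * b) (r * a + s * b).
Proof.
apply/matrixP=> i j; rewrite !mxE !big_ord_recl big_ord0 !mxE addr0.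
by case: i => [[|[|]]].
Qed.

Lemma col2_delta (g : R) : col2 g 0 = g *: delta_mx 0 0.
Proof.
apply/matrixP=> i j; rewrite !mxE (ord1 j) /= eqxx andbT.
by case: i => [[|[|]]] //= ?; rewrite ?mulr1 ?mulr0.
Qed.

Lemma delta_split n (c : R) :
  (c *: delta_mx 0 0 : 'cV[R]_(2 + n)) = col_mx (c *: delta_mx 0 0 : 'cV_2) 0.
Proof.
apply/matrixP=> i j; rewrite !mxE; case: splitP => k hk; rewrite !mxE.
  by rewrite -(inj_eq val_inj) /= hk.
by rewrite -(inj_eq val_inj) /= hk mulr0.
Qed.

Lemma conv_split n (a d : R) :
  (col_mx (a%:M : 'M_1) (d *: delta_mx 0 0 : 'cV_(n.+1)) : 'cV_(1 + n.+1))
   = (col_mx (col2 a d) 0 : 'cV_(2 + n)).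
Proof.
apply/matrixP=> i j; rewrite !mxE (ord1 j).
case: splitP => k hk; case: splitP => l hl; rewrite !mxE;
  rewrite -?(inj_eq val_inj) /=; move: hk hl; case: k => [k hk'] /=; 
  case: l => [l hl'] /= -> //.
all: case: k hk' => [|k] hk' /=.
all: rewrite ?mulr1 ?mulr0 //.
all: move=> hl; subst l => //.
Qed.

End M2.
Lemma bez2 (R : idomainType) : bezout_domain R -> forall a b : R,
  exists g x y a' b', g = x * a + y * b /\ a = a' * g /\ b = b' * g.
Proof.
move=> bez a b.
have [d hd] := bez 2 (fun i : 'I_2 => if i == 0 then a else b).
have [c hc] := (hd d).2 (ex_intro _ 1 (esym (mul1r d))).
have [ra hra] : exists r, a = r * d.
  apply: (hd a).1; exists (fun i : 'I_2 => if i == 0 then 1 else 0).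
  by rewrite !big_ord_recl big_ord0 /= mul0r mul1r !addr0.
have [rb hrb] : exists r, b = r * d.
  apply: (hd b).1; exists (fun i : 'I_2 => if i == 0 then 0 else 1).
  by rewrite !big_ord_recl big_ord0 /= mul0r mul1r addr0 add0r.
exists d, (c ord0), (c (lift ord0 ord0)), ra, rb; split=> //.
by rewrite hc !big_ord_recl big_ord0 /= addr0.
Qed.

Lemma col_reduce (R : idomainType) (bez : bezout_domain R) n (v : 'cV[R]_n.+1) :
  exists P P' : 'M[R]_n.+1, exists d, P *m P' = 1%:M /\ P' *m P = 1%:M /\
    P *m v = d *: delta_mx 0 0.
Proof.
elim: n v => [|n IH] v.
  exists 1%:M, 1%:M, (v 0 0); rewrite !mul1mx; split=> //; split=> //.
  by apply/matrixP=> i j; rewrite (ord1 i) (ord1 j) !mxE /= mulr1.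
have vK := vsubmxK (v : 'cV_(1 + n.+1)).
set v1 := usubmx _ in vK; set v2 := dsubmx _ in vK.
have [P2 [P2' [d2 [h1 [h2 h3]]]]] := IH v2.
pose B : 'M[R]_(1 + n.+1) := block_mx 1%:M 0 0 P2.
pose B' : 'M[R]_(1 + n.+1) := block_mx 1%:M 0 0 P2'.
have hB1 : B *m B' = 1%:M.
  by rewrite mulmx_block !mulmx0 !mul0mx !addr0 !add0r mulmx1 h1 -scalar_mx_block.
have hB2 : B' *m B = 1%:M.
  by rewrite mulmx_block !mulmx0 !mul0mx !addr0 !add0r mulmx1 h2 -scalar_mx_block.
have hBv : B *m v = col_mx (v1 0 0)%:M (d2 *: delta_mx 0 0).
  by rewrite -vK mul_block_col !mul0mx !addr0 add0r mul1mx h3 -mx11_scalar.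
rewrite conv_split in hBv.
have [g [x [y [a' [b' [hg [ha hb]]]]]]] := bez2 bez (v1 0 0) d2.
case: (eqVneq g 0) => [g0|gn0].
  exists B, B', 0; split=> //; split=> //.
  by rewrite hBv ha hb g0 !mulr0 col2_delta !scale0r col_mx0.
have hxy : x * a' + y * b' = 1.
  apply: (mulIf gn0); rewrite mul1r mulrDl -!mulrA -ha -hb.
  by rewrite -hg.
pose Q : 'M[R]_(2 + n) := block_mx (mx2 x y (-b') a') 0 0 1%:M.
pose Q' : 'M[R]_(2 + n) := block_mx (mx2 a' (-y) b' x) 0 0 1%:M.
have hQ1 : Q *m Q' = 1%:M.
  rewrite mulmx_block !mulmx0 !mul0mx !addr0 !add0r mulmx1 mx2M.
  rewrite hxy mulrN (mulrC y) addNr (mulrC a') mulNr addNr mulNr mulrN opprK.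
  by rewrite (mulrC b') (mulrC a') addrC hxy mx2_1 -scalar_mx_block.
have hQ2 : Q' *m Q = 1%:M.
  rewrite mulmx_block !mulmx0 !mul0mx !addr0 !add0r mulmx1 mx2M.
  have -> : a' * x + - y * - b' = 1 by rewrite mulrNN (mulrC a' x).
  have -> : b' * y + x * a' = 1 by rewrite addrC (mulrC b' y).
  rewrite mulNr (mulrC a' y) addrN mulrN (mulrC b' x) addrN.
  by rewrite mx2_1 -scalar_mx_block.
exists (Q *m B), (B' *m Q'), g; split; last split.
- by rewrite mulmxA -(mulmxA Q) hB1 mulmx1 hQ1.
- by rewrite mulmxA -(mulmxA B') hQ2 mulmx1 hB2.
have e : (Q *m col_mx (col2 (v1 0 0) d2) 0 : 'cV_(2 + n)) = col_mx (col2 g 0) 0.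
  rewrite mul_block_col !mul0mx !mulmx0 !addr0 mx2_col2.
  by rewrite -hg ha hb mulNr mulrA (mulrC b') -mulrA addNr.
rewrite -mulmxA hBv delta_split -col2_delta.
exact: e.
Qed.

Lemma delta_split1 (R : comRingType) n (c : R) :
  (c *: delta_mx 0 0 : 'cV[R]_(1 + n)) = col_mx c%:M 0.
Proof.
apply/matrixP=> i j; rewrite !mxE (ord1 j); case: splitP => k hk; rewrite !mxE.
  by move: hk; rewrite (ord1 k) /= => hk; rewrite -(inj_eq val_inj) /= hk !eqxx mulr1.
by rewrite -(inj_eq val_inj) /= hk /= mulr0.
Qed.

Lemma pid_block (R : comRingType) n r :
  (block_mx (1%:M : 'M[R]_1) 0 0 (pid_mx r : 'M_n) : 'M_(1 + n)) = pid_mx (1 + r).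
Proof.
apply/matrixP=> i j; rewrite !mxE; case: (splitP i) => i' hi; rewrite !mxE;
  case: (splitP j) => j' hj; rewrite !mxE hi hj /=.
- by rewrite (ord1 i') (ord1 j').
- by rewrite (ord1 i').
- by rewrite (ord1 j') /=.
- by rewrite !add1n eqSS ltnS.
Qed.

Lemma inv_mul (R : comRingType) n (X X' Y Y' : 'M[R]_n) :
  X *m X' = 1%:M -> Y *m Y' = 1%:M -> (X *m Y) *m (Y' *m X') = 1%:M.
Proof.
by move=> hX hY; rewrite mulmxA -(mulmxA X) hY mulmx1 hX.
Qed.

Lemma idem_diag (R : idomainType) (bez : bezout_domain R) n (E : 'M[R]_n) :
  E *m E = E -> exists r (T T' : 'M[R]_n), (r <= n)%N /\ T *m T' = 1%:M /\
    T' *m T = 1%:M /\ E = T *m pid_mx r *m T'.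
Proof.
elim: n E => [|n IH] E hE.
  exists 0%N, 1%:M, 1%:M; split=> //; rewrite !mulmx1; split=> //; split=> //.
  by rewrite [E]flatmx0 [RHS]flatmx0.
case/boolP: [exists j, col j E != 0] => [/existsP [j hj] | /existsPn hall]; last first.
  exists 0%N, 1%:M, 1%:M; split=> //; rewrite !mulmx1; split=> //; split=> //.
  rewrite pid_mx_0 mulmx0; apply/matrixP=> i j; move: (hall j); rewrite negbK => /eqP.
  by move/matrixP/(_ i 0); rewrite !mxE.
set w := col j E in hj.
have Ew : E *m w = w by rewrite /w colE mulmxA hE.
have [P [P' [d [hP1 [hP2 hPw]]]]] := col_reduce bez w.
have dn0 : d != 0.
  apply: contra hj => /eqP d0; apply/eqP.
  by rewrite -[w]mul1mx -hP2 -mulmxA hPw d0 scale0r mulmx0.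
pose E' := P *m E *m P'.
have hE'w : E' *m (d *: delta_mx 0 0 : 'cV_n.+1) = d *: delta_mx 0 0.
  by rewrite -hPw /E' -!mulmxA (mulmxA P' P) hP2 mul1mx Ew.
have hE'2 : E' *m E' = E'.
  by rewrite /E' !mulmxA -(mulmxA _ P' P) hP2 mulmx1 -(mulmxA P E E) hE.
have E'K := submxK (E' : 'M_(1 + n)).
set a := ursubmx _ in E'K; set D := drsubmx _ in E'K.
set u := ulsubmx _ in E'K; set l := dlsubmx _ in E'K.
have hc : (E' : 'M_(1 + n)) *m col_mx d%:M 0 = col_mx d%:M 0.
  by rewrite -delta_split1.
rewrite -E'K mul_block_col !mulmx0 !addr0 !mul_mx_scalar in hc.
case/eq_col_mx: hc => hu hl.
have u1 : u = 1%:M.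
  apply/eqP; rewrite -subr_eq0.
  have := scalemx_eq0 d (u - 1%:M); rewrite (negPf dn0) /= => <-.
  by rewrite scalerBr hu scalemx1 subrr.
have l0 : l = 0.
  by apply/eqP; move/eqP: hl; rewrite scalemx_eq0 (negPf dn0).
rewrite u1 l0 in E'K.
have hsq : (block_mx 1%:M a 0 D : 'M_(1 + n)) *m block_mx 1%:M a 0 D = block_mx 1%:M a 0 D.
  by rewrite E'K.
rewrite mulmx_block !mulmx0 !mul0mx !mulmx1 !mul1mx !addr0 !add0r in hsq.
case/eq_block_mx: hsq => _ haD _ hD.
have aD : a *m D = 0 by apply: (addrI a); rewrite addr0.
have [r [T2 [T2' [hr [hT1 [hT2 hDT]]]]]] := IH D hD.
pose G : 'M[R]_(1 + n) := block_mx 1%:M (- a) 0 1%:M.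
pose G' : 'M[R]_(1 + n) := block_mx 1%:M a 0 1%:M.
pose dT : 'M[R]_(1 + n) := block_mx 1%:M 0 0 T2.
pose dT' : 'M[R]_(1 + n) := block_mx 1%:M 0 0 T2'.
have hG1 : G *m G' = 1%:M.
  by rewrite mulmx_block !mulmx0 !mul0mx !mulmx1 !mul1mx !addr0 !add0r addrN -scalar_mx_block.
have hG2 : G' *m G = 1%:M.
  by rewrite mulmx_block !mulmx0 !mul0mx !mulmx1 !mul1mx !addr0 !add0r addNr -scalar_mx_block.
have hd1 : dT *m dT' = 1%:M.
  by rewrite mulmx_block !mulmx0 !mul0mx !mulmx1 !addr0 !add0r hT1 -scalar_mx_block.
have hd2 : dT' *m dT = 1%:M.
  by rewrite mulmx_block !mulmx0 !mul0mx !mulmx1 !addr0 !add0r hT2 -scalar_mx_block.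
have hE'G : E' = G *m (dT *m pid_mx (1 + r)%N *m dT') *m G'.
  rewrite -pid_block /dT /dT' !mulmx_block !mulmx0 !mul0mx !mulmx1 !mul1mx !addr0 !add0r.
  rewrite -hDT !mulmx0 !mul0mx ?oppr0 !addr0 !add0r ?mul1mx ?mulNmx aD ?oppr0 ?addr0.
  by rewrite E'K.
have hEE : E = P' *m E' *m P.
  by rewrite /E' !mulmxA hP2 mul1mx -mulmxA hP2 mulmx1.
exists (1 + r)%N, (P' *m G *m dT), (dT' *m G' *m P); split; first by rewrite add1n ltnS.
split; last split.
- rewrite -(mulmxA dT'); apply: inv_mul hd1; exact: inv_mul hP2 hG1.
- rewrite -(mulmxA P'); apply: inv_mul hP1; exact: inv_mul hd2 hG2.
by rewrite hEE hE'G !mulmxA.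
Qed.

Lemma map_frac_eq0 (R : idomainType) m k (W : 'M[R]_(m,k)) :
  map_mx (@tofrac R) W = 0 -> W = 0.
Proof.
move=> h; apply/matrixP=> i j; move/matrixP/(_ i j): h; rewrite !mxE => /eqP.
by rewrite tofrac_eq0 => /eqP.
Qed.

Lemma ker_eq (K : fieldType) n (M1 M2 : 'M[K]_n) :
  (kermx M1 <= kermx M2)%MS -> \rank M1 = \rank M2 -> (kermx M2 <= kermx M1)%MS.
Proof.
move=> s12 e.
have [_ h] := mxrank_leqif_sup s12.
by rewrite -h !mxrank_ker e.
Qed.

Lemma ker_field (K : fieldType) n k (a p q : 'M[K]_n) (w : 'M[K]_(n, k)) :
  \rank (a *m p) = \rank a -> a *m p = q *m a -> a *m p *m w = 0 -> a *m w = 0.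
Proof.
move=> rk hQ hW.
have s12 : (kermx a^T <= kermx (a *m p)^T)%MS.
  by rewrite sub_kermx hQ trmx_mul mulmxA mulmx_ker mul0mx.
have s21 := ker_eq s12 (etrans (mxrank_tr _) (etrans (esym rk) (esym (mxrank_tr _)))).
have : (w^T <= kermx (a *m p)^T)%MS.
  by rewrite sub_kermx -trmx_mul hW trmx0.
move/(submx_trans)/(_ s21); rewrite sub_kermx -trmx_mul => /eqP.
by move/(congr1 trmx); rewrite trmxK trmx0.
Qed.

Lemma ker_lemma (R : idomainType) n k (A P Y Q : 'M[R]_n) (W : 'M[R]_(n,k)) :
  A *m P *m Y = A -> A *m P = Q *m A -> A *m P *m W = 0 -> A *m W = 0.
Proof.
move=> hY hQ hW.
apply: map_frac_eq0; rewrite map_mxM.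
apply: (@ker_field _ _ _ _ (map_mx (@tofrac R) P) (map_mx (@tofrac R) Q)).
- apply/eqP; rewrite eqn_leq mxrankM_maxl /=.
  by rewrite -{1}hY !map_mxM mxrankM_maxl.
- by rewrite -!map_mxM hQ.
- by rewrite -!map_mxM hW map_mx0.
Qed.

Lemma rkM_l (R : idomainType) m n p (X : 'M[R]_(m,n)) (Y : 'M[R]_(n,p)) :
  (\rank (map_mx (@tofrac R) (X *m Y)) <= \rank (map_mx (@tofrac R) X))%N.
Proof. by rewrite map_mxM mxrankM_maxl. Qed.

Lemma rkM_r (R : idomainType) m n p (X : 'M[R]_(m,n)) (Y : 'M[R]_(n,p)) :
  (\rank (map_mx (@tofrac R) (X *m Y)) <= \rank (map_mx (@tofrac R) Y))%N.
Proof. by rewrite map_mxM mxrankM_maxr. Qed.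

Lemma rank_pid_le (R : idomainType) n (E F U V T1 T1' T2 T2' : 'M[R]_n) r s :
  (r <= n)%N -> (s <= n)%N -> T1' *m T1 = 1%:M ->
  E = T1 *m pid_mx r *m T1' -> F = T2 *m pid_mx s *m T2' -> E = U *m F *m V ->
  (r <= s)%N.
Proof.
move=> hr hs h1 hE hF hEF.
have hp : pid_mx r = T1' *m E *m T1.
  by rewrite hE !mulmxA h1 mul1mx -mulmxA h1 mulmx1.
have er : \rank (map_mx (@tofrac R) (pid_mx r : 'M_n)) = r by rewrite map_pid_mx rank_pid_mx.
have es : \rank (map_mx (@tofrac R) (pid_mx s : 'M_n)) = s by rewrite map_pid_mx rank_pid_mx.
apply: (@leq_trans (\rank (map_mx (@tofrac R) E))).
  rewrite -{1}er hp; apply: leq_trans (rkM_l _ _) _; exact: rkM_r.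
apply: (@leq_trans (\rank (map_mx (@tofrac R) F))).
  rewrite {1}hEF; apply: leq_trans (rkM_l _ _) _; exact: rkM_r.
rewrite -es hF; apply: leq_trans (rkM_l _ _) _; exact: rkM_r.
Qed.

Lemma sandwich (R : comRingType) n (X Y Y' Z P Q : 'M[R]_n) :
  Y' *m Y = 1%:M -> X *m P *m Y' *m (Y *m Q *m Z) = X *m (P *m Q) *m Z.
Proof.
by move=> h; rewrite !mulmxA -(mulmxA _ Y' Y) h mulmx1.
Qed.

Theorem corollary2p2 (R : idomainType) (n : nat) (A B C : 'M[R]_n) :
  bezout_domain R ->
  A *m B *m A = A *m C *m A ->
  (forall y : 'cV[R]_n, colspace A y <-> colspace (A *m B *m A) y) ->
  mx_similar (A *m B) (C *m A).
Proof.
move=> bez hABA hcol.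
have hx : forall j : 'I_n, exists x : 'cV[R]_n, col j A = A *m B *m A *m x.
  move=> j; have [x hx] := (hcol (col j A)).1 (ex_intro _ (delta_mx j 0) (colE j A)).
  by exists x.
have [f hf] := fin_all_exists hx.
pose X : 'M[R]_n := \matrix_(i, j) f j i 0.
have H0 : A *m B *m A *m X = A.
  apply/matrixP=> i j; have := congr1 (fun M : 'cV[R]_n => M i 0) (hf j); rewrite !mxE => ->.
  by apply: eq_bigr => k _; congr (_ * _); rewrite /X; exact: mxE.
have I1 : forall k (W : 'M[R]_(n, k)), A *m B *m A *m W = 0 -> A *m W = 0.
  move=> k W hW; apply: (@ker_lemma _ _ _ A (B *m A) X (A *m B)).
  - by rewrite mulmxA.
  - by rewrite !mulmxA.
  - by rewrite mulmxA.
have Fa : A *m C *m A *m X = A by rewrite -hABA.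
have FaZ m (Z : 'M[R]_(m, n)) : Z *m A *m C *m A *m X = Z *m A.
  by move: (congr1 (mulmx Z) Fa); rewrite !mulmxA.
have H0Z m (Z : 'M[R]_(m, n)) : Z *m A *m B *m A *m X = Z *m A.
  by move: (congr1 (mulmx Z) H0); rewrite !mulmxA.
have I2 : forall k (W : 'M[R]_(n, k)), C *m A *m C *m A *m W = 0 -> C *m A *m W = 0.
  move=> k W hW; apply: (@ker_lemma _ _ _ (C *m A) (C *m A) X (C *m A)).
  - by rewrite !mulmxA FaZ.
  - by [].
  - by rewrite !mulmxA.
have Fc : A *m X *m B *m A = A.
  apply/eqP; rewrite -subr_eq0; apply/eqP.
  have := I1 _ (X *m B *m A - 1%:M); rewrite mulmxBr mulmx1 mulmxBr mulmx1 !mulmxA.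
  by rewrite H0 subrr; apply.
have FcZ m (Z : 'M[R]_(m, n)) : Z *m A *m X *m B *m A = Z *m A.
  by move: (congr1 (mulmx Z) Fc); rewrite !mulmxA.
have Fe : C *m A *m X *m C *m A = C *m A.
  apply/eqP; rewrite -subr_eq0; apply/eqP.
  have := I2 _ (X *m C *m A - 1%:M); rewrite mulmxBr mulmx1 mulmxBr mulmx1 !mulmxA.
  by rewrite FaZ subrr; apply.
have FeZ m (Z : 'M[R]_(m, n)) : Z *m C *m A *m X *m C *m A = Z *m C *m A.
  by move: (congr1 (mulmx Z) Fe); rewrite !mulmxA.
have Fh : A *m X *m C *m A *m X *m B = A *m X *m B.
  apply/eqP; rewrite -subr_eq0; apply/eqP.
  have := I1 _ (X *m C *m A *m X *m B - X *m B); rewrite !mulmxBr !mulmxA.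
  by rewrite H0 Fa subrr; apply.
have Fi : A *m X *m C *m A *m X = A *m X.
  apply/eqP; rewrite -subr_eq0; apply/eqP.
  have := I1 _ (X *m C *m A *m X - X); rewrite !mulmxBr !mulmxA.
  by rewrite H0 Fa subrr; apply.
pose E := A *m X *m B. pose F := C *m A *m X.
pose U := A *m X. pose V := C *m A *m X *m B.
pose M := A *m B. pose N := C *m A.
have hE2 : E *m E = E by rewrite /E !mulmxA Fc.
have hF2 : F *m F = F by rewrite /F !mulmxA Fe.
have hUV : U *m V = E by rewrite /U /V /E !mulmxA Fh.
have hVU : V *m U = F by rewrite /U /V /F !mulmxA FcZ.
have hUF : U *m F = U by rewrite /U /F !mulmxA Fi.
have hFV : F *m V = V by rewrite /F /V !mulmxA Fe.
have hEM : E *m M = M by rewrite /E /M !mulmxA Fc.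
have hNF : N *m F = N by rewrite /N /F !mulmxA FaZ.
have hVM : V *m M = N *m V by rewrite /V /M /N !mulmxA FcZ FaZ.
have hEUFV : E = U *m F *m V by rewrite -hVU -{1}hE2 -hUV !mulmxA.
have hFVEU : F = V *m E *m U by rewrite -hUV -{1}hF2 -hVU !mulmxA.
have [r [T1 [T1' [hr [h11 [h12 hET]]]]]] := idem_diag bez hE2.
have [s [T2 [T2' [hs [h21 [h22 hFT]]]]]] := idem_diag bez hF2.
have rs : r = s.
  apply/eqP; rewrite eqn_leq (rank_pid_le hr hs h12 hET hFT hEUFV).
  exact: (rank_pid_le hs hr h22 hFT hET hFVEU).
subst s.
pose W := T2 *m copid_mx r *m T1'. pose W' := T1 *m copid_mx r *m T2'.
have hFW : F *m W = 0 by rewrite hFT /W sandwich // mul_pid_mx_copid // mulmx0 mul0mx.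
have hW'F : W' *m F = 0 by rewrite hFT /W' sandwich // mul_copid_mx_pid // mulmx0 mul0mx.
have hWE : W *m E = 0 by rewrite hET /W sandwich // mul_copid_mx_pid // mulmx0 mul0mx.
have hW'W : W' *m W = 1%:M - E.
  rewrite /W /W' sandwich // copid_mx_id // /copid_mx mulmxBr mulmx1 mulmxBl h11.
  by rewrite hET.
pose S := V + W. pose S' := U + W'.
have hS : S' *m S = 1%:M.
  rewrite /S /S' mulmxDl !mulmxDr hUV hW'W.
  rewrite -hUF -mulmxA hFW mulmx0 -hFV mulmxA hW'F mul0mx add0r addr0.
  by rewrite addrC subrK.
have [_ Su] := mulmx1_unit hS.
have hSM : S *m M = N *m S.
  have hWM : W *m M = 0 by rewrite -hEM mulmxA hWE mul0mx.
  have hNW : N *m W = 0 by rewrite -hNF -mulmxA hFW mulmx0.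
  by rewrite /S mulmxDl mulmxDr hVM hWM hNW.
exists S; split=> //.
by rewrite -mulmxA -hSM mulmxA mulVmx // mul1mx.
Qed.
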